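(* Let $G$ be a bipartite graph with colour classes $V$ and $W$, where $\#V=v$ and $\#W=w$, and let $e$ be the number of edges of $G$. Suppose $G$ contains no cycle of length $4$ and no cycle of length $6$. Then: (i) $e^3-(v+w)e^2+2vwe-v^2w^2\le 0$; (ii) if moreover $v\ge\lfloor w^2/4\rfloor$, then $e\le v+\lfloor w^2/4\rfloor$. *)

(* Defs.v *)
(* A bipartite graph with colour classes V and W is given by
   finite types V, W and an edge relation E : V -> W -> bool (edges only go
   between the two classes; the graph is simple). *)
From mathcomp Require Import all_boot all_order all_algebra.
Set Implicit Arguments. Unset Strict Implicit. Unset Printing Implicit Defensive.

Definition nedges (V W : finType) (E : V -> W -> bool) : nat :=
  #|[set p : V * W | E p.1 p.2]|.

Definition has_C4 (V W : finType) (E : V -> W -> bool) : Prop :=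
  exists (v1 v2 : V) (w1 w2 : W),
    [/\ v1 != v2, w1 != w2 &
        [&& E v1 w1, E v2 w1, E v2 w2 & E v1 w2]].

Definition has_C6 (V W : finType) (E : V -> W -> bool) : Prop :=
  exists (v1 v2 v3 : V) (w1 w2 w3 : W),
    [/\ uniq [:: v1; v2; v3], uniq [:: w1; w2; w3] &
        [&& E v1 w1, E v2 w1, E v2 w2, E v3 w2, E v3 w3 & E v1 w3]].

(* Main.v *)
Require Import Defs.
From HB Require Import structures.
From mathcomp Require Import all_boot all_order all_algebra.
From mathcomp Require Import Rstruct.
From mathcomp Require Import all_classical all_reals all_analysis.
From mathcomp Require Import zify ring lra.
Set Implicit Arguments. Unset Strict Implicit. Unset Printing Implicit Defensive.
Import Order.TTheory GRing.Theory Num.Theory.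
Import numFieldNormedType.Exports.
Section Mantel.
Variables (V W : finType) (E : V -> W -> bool).
Hypothesis nC4 : ~ has_C4 E.
Hypothesis nC6 : ~ has_C6 E.

Definition mt_c x : option W := [pick y | E x y].
Definition mt_P x y z := [&& E x y, E x z, y != z & (mt_c x == Some y) || (mt_c x == Some z)].
Definition mt_h y z := [exists x, mt_P x y z].
Definition mt_deg y := #|[set z | mt_h y z]|.

Lemma mt_P_sym x y z : mt_P x y z = mt_P x z y.
Proof.
rewrite /mt_P; case: (E x y); case: (E x z) => //=.
by rewrite eq_sym orbC.
Qed.

Lemma mt_h_sym y z : mt_h y z = mt_h z y.
Proof. by apply/existsP/existsP => [[x]|[x]]; rewrite mt_P_sym; exists x. Qed.

Lemma mt_P_neq x y z : mt_P x y z -> y != z.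
Proof. by case/and4P. Qed.

Lemma mt_c_some x y : mt_c x = Some y -> E x y.
Proof. rewrite /mt_c; case: pickP => // y' h [<-]; exact: h. Qed.

Lemma mt_tri y z u : mt_h y z -> mt_h y u -> mt_h z u -> False.
Proof.
move=> /existsP[x1 /and4P[a1 b1 n1 o1]] /existsP[x2 /and4P[a2 b2 n2 o2]] /existsP[x3 /and4P[a3 b3 n3 o3]].
have C4 : forall p q (s t : W), p != q -> s != t -> E p s -> E q s -> E q t -> E p t -> False.
  move=> p q s t pq st h1 h2 h3 h4; apply: nC4; exists p, q, s, t; split => //.
  by rewrite h1 h2 h3 h4.
have [e12|n12] := eqVneq x1 x2.
  subst x2.
  have [e13|n13] := eqVneq x1 x3.
    subst x3.
    case Hc: (mt_c x1) o1 o2 o3 => [t|] //.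
    rewrite !(inj_eq (@Some_inj _)).
    have [->|ty] := eqVneq t y; first by rewrite (negbTE n1) (negbTE n2).
    move=> /= /eqP -> /eqP e.
    by move: n3; rewrite e eqxx.
  exact: (C4 x1 x3 z u n13 n3 b1 a3 b3 b2).
have [e13|n13] := eqVneq x1 x3.
  subst x3; exact: (C4 x1 x2 y u n12 n2 a1 a2 b2 b3).
have [e23|n23] := eqVneq x2 x3.
  subst x3; exact: (C4 x1 x2 y z n12 n1 a1 a2 a3 b1).
apply: nC6; exists x1, x3, x2, z, u, y; split => /=.
- by rewrite !inE negb_or n13 n12 /= andbT; rewrite eq_sym.
- by rewrite !inE negb_or n3 andbT /= ![_ == y]eq_sym n1 n2.
- by rewrite b1 a3 b3 b2 a2 a1.
Qed.


Lemma mt_card_sum (T : finType) (P : {pred T}) : #|P| = (\sum_t (t \in P : nat))%N.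
Proof. by rewrite -sum1_card big_mkcond; apply: eq_bigr => t _; case: (t \in P). Qed.

Lemma mt_deg_sum y : mt_deg y = (\sum_z (mt_h y z : nat))%N.
Proof. by rewrite /mt_deg mt_card_sum; apply: eq_bigr => z _; rewrite inE. Qed.

Lemma mt_pair y z : mt_h y z -> (mt_deg y + mt_deg z <= #|W|)%N.
Proof.
move=> hyz; rewrite /mt_deg -cardsUI.
have -> : [set u | mt_h y u] :&: [set u | mt_h z u] = finset.set0.
  apply/setP => u; rewrite !inE; apply/negbTE/negP => /andP[h1 h2].
  exact: (mt_tri hyz h1 h2).
by rewrite cards0 addn0 max_card.
Qed.

Lemma mt_amgm (a b : nat) : (2 * (a * b) <= a * a + b * b)%N.
Proof.
case: (leqP a b) => h.
  have -> : b = (a + (b - a))%N by lia.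
  move: (b - a)%N => k; nia.
have -> : a = (b + (a - b))%N by lia.
move: (a - b)%N => k; nia.
Qed.

Lemma mt_mantel : (2 * \sum_y mt_deg y <= #|W| ^ 2)%N.
Proof.
set w := #|W|; set S := (\sum_y mt_deg y)%N; set Q := (\sum_y mt_deg y * mt_deg y)%N.
have b1 : (\sum_y \sum_z (mt_h y z : nat) * mt_deg y = Q)%N.
  apply: eq_bigr => y _; by rewrite -big_distrl /= -mt_deg_sum.
have b2 : (\sum_y \sum_z (mt_h y z : nat) * mt_deg z = Q)%N.
  rewrite exchange_big; apply: eq_bigr => z _.
  rewrite -big_distrl /= mt_deg_sum; congr (_ * _).
  by apply: eq_bigr => y _; rewrite mt_h_sym.
have a : (\sum_y \sum_z (mt_h y z : nat) * (mt_deg y + mt_deg z) <= w * S)%N.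
  rewrite /S big_distrr; apply: leq_sum => y _ /=.
  rewrite [X in _ <= w * X]mt_deg_sum big_distrr /=; apply: leq_sum => z _.
  case hz: (mt_h y z) => /=; last by rewrite mul0n muln0.
  by rewrite mul1n muln1; apply: mt_pair.
have twoQ : (2 * Q <= w * S)%N.
  apply: leq_trans a; rewrite mul2n -addnn -{1}b1 -b2 -big_split /=.
  by apply: leq_sum => y _; rewrite -big_split /=; apply: leq_sum => z _; rewrite mulnDr.
have cs : (2 * (S * S) <= 2 * (w * Q))%N.
  have e1 : (S * S = \sum_y \sum_z mt_deg y * mt_deg z)%N.
    by rewrite /S big_distrl /=; apply: eq_bigr => y _; rewrite big_distrr.
  have e2 : (2 * (w * Q) = \sum_y \sum_z (mt_deg y * mt_deg y + mt_deg z * mt_deg z))%N.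
    rewrite mul2n -addnn; under eq_bigr => y _ do rewrite big_split /=.
    rewrite big_split /=; congr (_ + _).
      by rewrite /Q big_distrr /=; apply: eq_bigr => y _; rewrite sum_nat_const.
    by rewrite sum_nat_const.
  rewrite e1 e2 big_distrr /=; apply: leq_sum => y _.
  rewrite big_distrr /=; apply: leq_sum => z _; exact: mt_amgm.
have fin : (2 * (S * S) <= w * w * S)%N.
  apply: leq_trans cs _; rewrite mulnCA -mulnA; apply: leq_mul => //.
have [S0|Spos] := posnP S; first by rewrite S0.
rewrite -(leq_pmul2r Spos) -mulnA expnS expn1; exact: fin.
Qed.

Lemma mt_sum_le1 (T : finType) (P : pred T) :
  (forall p q, P p -> P q -> p = q) -> (\sum_t (P t : nat) <= 1)%N.
Proof.
move=> u; have := mt_card_sum [pred t | P t]; rewrite /= => <-.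
by apply/card_le1_eqP => p q; rewrite !inE => /u h /h.
Qed.

Lemma mt_hP y z : (\sum_x (mt_P x y z : nat) <= mt_h y z)%N.
Proof.
case hh: (mt_h y z).
  apply: mt_sum_le1 => x x' /and4P[a1 b1 n1 _] /and4P[a2 b2 _ _].
  apply/eqP; apply/negPn/negP => nx; apply: nC4; exists x, x', y, z; split => //.
  by rewrite a1 a2 b2 b1.
rewrite leqn0; apply/eqP; apply: big1 => x _.
by case hp: (mt_P x y z) => //; move: hh; rewrite /mt_h; move/negbT/existsPn/(_ x); rewrite hp.
Qed.

Lemma mt_x x : (2 * (#|[set y | E x y]|).-1 <= \sum_y \sum_z (mt_P x y z : nat))%N.
Proof.
case Hc: (mt_c x) => [c0|]; last first.
  move: Hc; rewrite /mt_c; case: pickP => // h _.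
  suff -> : #|[set y | E x y]| = 0%N by [].
  by apply/eqP; rewrite cards_eq0; apply/eqP/setP => y; rewrite !inE h.
have ec := mt_c_some Hc.
have pw : forall y z, ((E x y && E x z && (y != z) && (c0 == y)) : nat) +
                      ((E x y && E x z && (y != z) && (c0 == z)) : nat) <= mt_P x y z.
  move=> y z; rewrite /mt_P Hc !(inj_eq (@Some_inj _)).
  case: (E x y); case: (E x z) => //=.
  case: eqVneq => [->|yz] //=.
  by case: eqVneq => [->|] //=; rewrite (negbTE yz).
have H : (\sum_y \sum_z (((E x y && E x z && (y != z) && (c0 == y)) : nat) +
                      ((E x y && E x z && (y != z) && (c0 == z)) : nat)) <= \sum_y \sum_z (mt_P x y z : nat))%N.
  by apply: leq_sum => y _; apply: leq_sum => z _; exact: pw.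
apply: leq_trans H.
under eq_bigr => y _ do rewrite big_split /=.
rewrite big_split /= mul2n -addnn.
have s1 : (\sum_y \sum_z ((E x y && E x z && (y != z) && (c0 == y)) : nat) = (#|[set y | E x y]|).-1)%N.
  rewrite (bigD1 c0) //= [X in (_ + X)%N]big1; last first.
    by move=> y ny; apply: big1 => z _; rewrite [c0 == y]eq_sym (negbTE ny) andbF.
  rewrite addn0 [in RHS](cardsD1 c0) inE ec /= add0n mt_card_sum.
  by apply: eq_bigr => z _; rewrite !inE eqxx andbT andbC eq_sym.
have s2 : (\sum_y \sum_z ((E x y && E x z && (y != z) && (c0 == z)) : nat) = (#|[set y | E x y]|).-1)%N.
  rewrite exchange_big /= (bigD1 c0) //= [X in (_ + X)%N]big1; last first.
    by move=> z nz; apply: big1 => y _; rewrite [c0 == z]eq_sym (negbTE nz) andbF.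
  rewrite addn0 [in RHS](cardsD1 c0) inE ec /= add0n mt_card_sum.
  by apply: eq_bigr => y _; rewrite !inE eqxx !andbT andbC.
by rewrite s1 s2.
Qed.

Lemma mt_final : (4 * \sum_x (#|[set y | E x y]|).-1 <= #|W| ^ 2)%N.
Proof.
apply: leq_trans mt_mantel.
rewrite (_ : 4 = 2 * 2)%N // -mulnA leq_pmul2l //.
rewrite big_distrr /=.
apply: leq_trans (_ : \sum_x \sum_y \sum_z (mt_P x y z : nat) <= _)%N.
  by apply: leq_sum => x _; apply: mt_x.
rewrite exchange_big; apply: leq_sum => y _; rewrite exchange_big mt_deg_sum.
by apply: leq_sum => z _; apply: mt_hP.
Qed.

End Mantel.

Local Open Scope classical_set_scope.
Local Open Scope ring_scope.

Section An.
Variable R : realType.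

Lemma ndecr0 (f df : R -> R) : (forall x : R, is_derive x 1 f (df x)) ->
  (forall x, 0 <= x -> 0 <= df x) -> forall s, 0 <= s -> f 0 <= f s.
Proof.
move=> fd dfp s s0.
have cf : {within `[0, s], continuous f}.
  apply: derivable_within_continuous => x _.
  by have := fd x => /(@ex_derive _ _ _ _ _ _ _).
have [c cin eq] := MVT_segment s0 (fun x _ => fd x) cf.
rewrite -subr_ge0 eq subr0 mulr_ge0 // dfp //.
by move: cin; rewrite in_itv /= => /andP[].
Qed.

Definition chi (s : R) := s * expR s + s - 2 * expR s + 2.
Lemma chi_der (x : R) : is_derive x 1 chi (x * expR x - expR x + 1).
Proof.
rewrite /chi; apply: is_derive_eq.
by rewrite /GRing.scale /= mulr1; lra.
Qed.

Lemma chi_ge0 s : 0 <= s -> 0 <= chi s.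
Proof.
move=> s0.
have -> : 0 = chi 0 by rewrite /chi expR0; lra.
apply: (ndecr0 chi_der) => // x _.
have h1 := expR_ge1Dx (- x).
have h2 := expRxMexpNx_1 x.
have h3 := expR_gt0 x.
nra.
Qed.

Definition rho (s : R) := expR s * expR s - 1 - 2 * s * expR s.
Lemma rho_der (x : R) : is_derive x 1 rho (2 * expR x * (expR x - 1 - x)).
Proof.
rewrite /rho; apply: is_derive_eq.
by rewrite /GRing.scale /= !mulr1; lra.
Qed.

Lemma rho_ge0 s : 0 <= s -> 0 <= rho s.
Proof.
move=> s0.
have -> : 0 = rho 0 by rewrite /rho expR0; lra.
apply: (ndecr0 rho_der) => // x _.
have h1 := expR_ge1Dx x.
have h3 := expR_gt0 x.
nra.
Qed.

Lemma lnL1 (u : R) : 1 <= u -> 2 * (u - 1) <= ln u * (u + 1).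
Proof.
move=> u1.
have u0 : 0 < u by lra.
have s0 := ln_ge0 u1.
have := chi_ge0 s0; rewrite /chi lnK ?posrE //; lra.
Qed.

Lemma lnL2 (u : R) : 0 < u -> u <= 1 -> u ^+ 2 - 1 <= 2 * u * ln u.
Proof.
move=> u0 u1.
have s0 : 0 <= - ln u by rewrite oppr_ge0 ln_le0.
have := rho_ge0 s0; rewrite /rho expRN lnK ?posrE //.
set L := ln u => h.
have hu : u^-1 * u = 1 by rewrite mulVf // gt_eqF.
have hu2 : 0 < u^-1 by rewrite invr_gt0.
have : u ^+ 2 * (u^-1 * u^-1 - 1 - 2 * - L * u^-1) >= 0 by rewrite mulr_ge0 // sqr_ge0.
rewrite expr2.
have -> : u * u * (u^-1 * u^-1 - 1 - 2 * - L * u^-1) = (u^-1 * u) * (u^-1 * u) - u * u + 2 * L * u * (u^-1 * u) by ring.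
rewrite hu; lra.
Qed.

Lemma tangent (t a : R) : 2 <= t -> 2 <= a ->
  a * (t - a) <= t * (a - 1) * ln ((t - 1) / (a - 1)).
Proof.
move=> t2 a2.
have a1 : 0 < a - 1 by lra.
have t1 : 0 < t - 1 by lra.
set u := (t - 1) / (a - 1).
have u0 : 0 < u by rewrite divr_gt0.
have ua : u * (a - 1) = t - 1 by rewrite /u divfK // gt_eqF.
set L := ln u.
case: (lerP a t) => ta.
- have u1 : 1 <= u by rewrite /u ler_pdivlMr // mul1r; lra.
  have h := lnL1 u1; rewrite -/L in h.
  have L0 : 0 <= L by apply: ln_ge0.
  have h' : 2 * (t - a) <= L * (t + a - 2).
    have : 2 * (u - 1) * (a - 1) <= L * (u + 1) * (a - 1) by rewrite ler_pM2r.
    have -> : 2 * (u - 1) * (a - 1) = 2 * (u * (a-1)) - 2 * (a - 1) by ring.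
    have -> : L * (u + 1) * (a - 1) = L * (u * (a-1)) + L * (a - 1) by ring.
    rewrite ua; lra.
  have hp : 0 < t + a - 2 by lra.
  rewrite -(ler_pM2r hp).
  have : (t - a) ^+ 2 * (a - 2) >= 0 by rewrite mulr_ge0 ?sqr_ge0 //; lra.
  have ta0 : 0 <= t * (a - 1) by rewrite mulr_ge0 //; lra.
  have := ler_wpM2l ta0 h'.
  rewrite expr2 => h1 h2.
  have -> : t * (a - 1) * L * (t + a - 2) = t * (a - 1) * (L * (t + a - 2)) by ring.
  have : a * (t - a) * (t + a - 2) = t * (a - 1) * (2 * (t - a)) - (t - a) * (t - a) * (a - 2) by ring.
  lra.
- have u1 : u <= 1 by rewrite /u ler_pdivrMr // mul1r; lra.
  have h := lnL2 u0 u1; rewrite -/L in h.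
  have h' : (t - a) * (t + a - 2) <= 2 * (t - 1) * (a - 1) * L.
    have : (u ^+ 2 - 1) * (a - 1) ^+ 2 <= 2 * u * L * (a - 1) ^+ 2.
      by rewrite ler_pM2r // exprn_gt0.
    have -> : (u ^+ 2 - 1) * (a - 1) ^+ 2 = (u * (a-1)) ^+ 2 - (a - 1) ^+ 2 by ring.
    have -> : 2 * u * L * (a - 1) ^+ 2 = 2 * (u * (a - 1)) * (a - 1) * L by ring.
    rewrite ua; nra.
  have hp : 0 < 2 * (t - 1) by lra.
  rewrite -(ler_pM2r hp).
  have : (t - a) ^+ 2 * (t - 2) >= 0 by rewrite mulr_ge0 ?sqr_ge0 //; lra.
  have t0 : 0 <= t by lra.
  have := ler_wpM2l t0 h'.
  rewrite expr2 => h1 h2.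
  have -> : t * (a - 1) * L * (2 * (t - 1)) = t * (2 * (t - 1) * (a - 1) * L) by ring.
  have : a * (t - a) * (2 * (t - 1)) = t * ((t - a) * (t + a - 2)) - (t - a) * (t - a) * (t - 2) by ring.
  lra.
Qed.


Lemma jensen (I : finType) (A : {set I}) (t : I -> R) :
  (0 < #|A|)%N -> (forall i, i \in A -> 2 <= t i) ->
  (\sum_(i in A) t i) * ln ((\sum_(i in A) t i) / #|A|%:R - 1)
    <= \sum_(i in A) t i * ln (t i - 1).
Proof.
move=> cA t2.
set S := \sum_(i in A) t i.
have cAR : 0 < (#|A|%:R : R) by rewrite ltr0n.
set a := S / #|A|%:R.
have Sa : S = a * #|A|%:R by rewrite /a divfK // gt_eqF.
have S2 : 2 * #|A|%:R <= S.
  rewrite /S -[#|A|]sum1_card natr_sum mulr_sumr; apply: ler_sum => i iA.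
  by rewrite mulr1 t2.
have a2 : 2 <= a by rewrite /a ler_pdivlMr.
have a1 : 0 < a - 1 by lra.
rewrite -subr_ge0 /S mulr_suml -sumrB.
have key : forall i, i \in A ->
    a * (t i - a) / (a - 1) <= t i * ln (t i - 1) - t i * ln (a - 1).
  move=> i iA.
  have ti := t2 i iA.
  rewrite -mulrBr -ln_div ?posrE; [|lra|lra].
  rewrite ler_pdivrMr //.
  have h := tangent ti a2.
  set X := ln _ in h *.
  by have -> : t i * X * (a - 1) = t i * (a - 1) * X by ring.
apply: le_trans (ler_sum _ key).
rewrite -mulr_suml -mulr_sumr sumrB sumr_const -/S Sa.
by rewrite -[(a *+ _)]mulr_natr subrr mulr0 mul0r.
Qed.


End An.

Lemma card_sum (T : finType) (P : {pred T}) : #|P| = (\sum_t (t \in P : nat))%N.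
Proof. by rewrite -sum1_card big_mkcond; apply: eq_bigr => t _; case: (t \in P). Qed.

Lemma sum_le1 (T : finType) (P : pred T) :
  (forall p q, P p -> P q -> p = q) -> (\sum_t (P t : nat) <= 1)%N.
Proof.
move=> u; have := card_sum [pred t | P t]; rewrite /= => <-.
by apply/card_le1_eqP => p q; rewrite !inE => /u h /h.
Qed.


Section Graph.
Variables (V W : finType) (E : V -> W -> bool) (A : {set V}) (B : {set W}).
Definition dA x := #|[set y in B | E x y]|.
Definition dB y := #|[set x in A | E x y]|.
Definition eAB := (\sum_(x in A) dA x)%N.

Section Real.
Variable R : realType.

Lemma I1 (g : V -> R) :
  \sum_(x in A) \sum_(y in B | E x y) g x = \sum_(x in A) (dA x)%:R * g x.
Proof.
apply: eq_bigr => x _.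
rewrite (eq_bigl (fun y => y \in [set y in B | E x y])); last by move=> y; rewrite inE.
by rewrite sumr_const mulr_natl.
Qed.

Lemma exch (F : V -> W -> R) :
  \sum_(x in A) \sum_(y in B | E x y) F x y = \sum_(y in B) \sum_(x in A | E x y) F x y.
Proof.
rewrite (exchange_big_dep (fun y => y \in B)) => [|x y _ /andP[]//].
by apply: eq_bigr => y yB; apply: eq_bigl => x; rewrite yB.
Qed.

Lemma I2 (h : W -> R) :
  \sum_(x in A) \sum_(y in B | E x y) h y = \sum_(y in B) (dB y)%:R * h y.
Proof.
rewrite exch; apply: eq_bigr => y _.
rewrite (eq_bigl (fun x => x \in [set x in A | E x y])); last by move=> x; rewrite inE.
by rewrite sumr_const mulr_natl.
Qed.


Definition PR := \sum_(x in A) \sum_(y in B | E x y) ((dA x)%:R - 1) * ((dB y)%:R - 1) : R.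
Lemma core : (forall x, x \in A -> (2 <= dA x)%N) -> (forall y, y \in B -> (2 <= dB y)%N) ->
  (eAB%:R * (eAB%:R - #|A|%:R) * (eAB%:R - #|B|%:R) <= #|A|%:R * #|B|%:R * PR :> R).
Proof.
move=> hA hB; set e := eAB; set P := PR.
have eA : (e%:R : R) = \sum_(x in A) (dA x)%:R by rewrite /e natr_sum.
have e1 : (e%:R : R) = \sum_(x in A) \sum_(y in B | E x y) 1.
  by rewrite I1 eA; apply: eq_bigr => x _; rewrite mulr1.
have eB : (e%:R : R) = \sum_(y in B) (dB y)%:R.
  by rewrite e1 (I2 (fun _ => 1)); apply: eq_bigr => x _; rewrite mulr1.
have al1 : forall x, x \in A -> 1 <= (dA x)%:R - 1 :> R.
  move=> x /hA; rewrite -(ler_nat R) => h; lra.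
have be1 : forall y, y \in B -> 1 <= (dB y)%:R - 1 :> R.
  move=> y /hB; rewrite -(ler_nat R) => h; lra.
have Pe : (e%:R : R) <= P.
  rewrite e1; apply: ler_sum => x xA; apply: ler_sum => y /andP[yB _].
  have := al1 x xA; have := be1 y yB; nra.
have P0 : 0 <= P.
  apply: le_trans Pe; exact: ler0n.
have [e0|epos] := eqVneq e 0%N.
  rewrite e0 mul0r mul0r mulr_ge0 // mulr_ge0 //.
have eR0 : (0 : R) < e%:R by rewrite ltr0n lt0n.
have cA : (0 < #|A|)%N.
  rewrite lt0n; apply/negP => /eqP/cards0_eq A0.
  by move: epos; rewrite /e /eAB A0 big_set0.
have cB : (0 < #|B|)%N.
  rewrite lt0n; apply/negP => /eqP/cards0_eq B0.
  by move: eR0; rewrite eB B0 big_set0 ltxx.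
have cAR : (0 : R) < #|A|%:R by rewrite ltr0n.
have cBR : (0 : R) < #|B|%:R by rewrite ltr0n.
have PR0 : 0 < P by apply: lt_le_trans Pe.
set M := P / e%:R.
have M0 : 0 < M by rewrite divr_gt0.
have pw : forall z, 0 < z -> ln z <= ln M + (z / M - 1).
  move=> z z0.
  have := @le_ln1Dx R (z / M - 1); rewrite [1 + _]addrC subrK.
  rewrite ln_div ?posrE // => h.
  have zM : 0 < z / M by rewrite divr_gt0.
  have : -1 < z / M - 1 by lra.
  move=> /h; lra.
have pos : forall x y, x \in A -> y \in B -> 0 < ((dA x)%:R - 1) * ((dB y)%:R - 1) :> R.
  move=> x y xA yB; have := al1 x xA; have := be1 y yB; nra.
have gibbs : \sum_(x in A) \sum_(y in B | E x y) ln (((dA x)%:R - 1) * ((dB y)%:R - 1))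
             <= e%:R * ln M.
  apply: le_trans (_ : _ <= \sum_(x in A) \sum_(y in B | E x y)
         (ln M + (((dA x)%:R - 1) * ((dB y)%:R - 1) / M - 1))) _.
    apply: ler_sum => x xA; apply: ler_sum => y /andP[yB _].
    by apply: pw; apply: pos.
  have -> : \sum_(x in A) \sum_(y in B | E x y)
         (ln M + (((dA x)%:R - 1) * ((dB y)%:R - 1) / M - 1)) =
       \sum_(x in A) \sum_(y in B | E x y) ln M +
       (\sum_(x in A) \sum_(y in B | E x y) (((dA x)%:R - 1) * ((dB y)%:R - 1) / M)
        - \sum_(x in A) \sum_(y in B | E x y) 1).
    rewrite -sumrB -big_split /=; apply: eq_bigr => x _.
    by rewrite -sumrB -big_split /=; apply: eq_bigr => y _.
  rewrite -e1 (I1 (fun _ => ln M)) -mulr_suml -eA.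
  have -> : \sum_(x in A) \sum_(y in B | E x y) (((dA x)%:R - 1) * ((dB y)%:R - 1) / M)
      = P / M.
    rewrite /P /PR mulr_suml; apply: eq_bigr => x _; by rewrite mulr_suml.
  have -> : P / M = e%:R by rewrite /M invf_div mulrA mulrC mulrA mulVf ?mul1r // gt_eqF.
  by rewrite subrr addr0.
have split : \sum_(x in A) \sum_(y in B | E x y) ln (((dA x)%:R - 1) * ((dB y)%:R - 1))
   = \sum_(x in A) (dA x)%:R * ln ((dA x)%:R - 1) + \sum_(y in B) (dB y)%:R * ln ((dB y)%:R - 1) :> R.
  have h1 := I1 (fun x => ln ((dA x)%:R - 1)); have h2 := I2 (fun y => ln ((dB y)%:R - 1)).
  simpl in h1, h2; rewrite -h1 -h2.
  rewrite -big_split /=; apply: eq_bigr => x xA.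
  rewrite -big_split /=; apply: eq_bigr => y /andP[yB _].
  rewrite lnM // posrE; [have := al1 x xA | have := be1 y yB]; lra.
have jA : e%:R * ln (e%:R / #|A|%:R - 1) <= \sum_(x in A) (dA x)%:R * ln ((dA x)%:R - 1) :> R.
  rewrite eA; apply: jensen => // x xA; have := hA x xA; rewrite -(ler_nat R); by [].
have jB : e%:R * ln (e%:R / #|B|%:R - 1) <= \sum_(y in B) (dB y)%:R * ln ((dB y)%:R - 1) :> R.
  rewrite eB; apply: jensen => // y yB; have := hB y yB; rewrite -(ler_nat R); by [].
have e2A : 2 * #|A|%:R <= e%:R :> R.
  rewrite eA -[#|A|]sum1_card natr_sum mulr_sumr; apply: ler_sum => x xA.
  by rewrite mulr1; have := hA x xA; rewrite -(ler_nat R).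
have e2B : 2 * #|B|%:R <= e%:R :> R.
  rewrite eB -[#|B|]sum1_card natr_sum mulr_sumr; apply: ler_sum => y yB.
  by rewrite mulr1; have := hB y yB; rewrite -(ler_nat R).
set a := e%:R / #|A|%:R in jA *.
set b := e%:R / #|B|%:R in jB *.
have ea : e%:R = a * #|A|%:R by rewrite /a divfK // gt_eqF.
have eb : e%:R = b * #|B|%:R by rewrite /b divfK // gt_eqF.
have a1 : 0 < a - 1.
  have : 2 * #|A|%:R <= a * #|A|%:R by rewrite -ea.
  rewrite ler_pM2r // => h; lra.
have b1 : 0 < b - 1.
  have : 2 * #|B|%:R <= b * #|B|%:R by rewrite -eb.
  rewrite ler_pM2r // => h; lra.
have h3 : e%:R * (ln (a - 1) + ln (b - 1)) <= e%:R * ln M.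
  rewrite mulrDr; apply: le_trans gibbs; rewrite split; exact: lerD.
rewrite ler_pM2l // -lnM ?posrE // ler_ln ?posrE ?mulr_gt0 // in h3.
rewrite /M ler_pdivlMr // in h3.
have -> : e%:R * (e%:R - #|A|%:R) * (e%:R - #|B|%:R) =
   #|A|%:R * #|B|%:R * ((a - 1) * (b - 1) * e%:R) :> R.
  rewrite {2}ea {2}eb; ring.
rewrite ler_pM2l ?mulr_gt0 //.
all: by rewrite ?invr_gt0.
Qed.
End Real.

Section Count.
Hypothesis nC4 : ~ has_C4 E.
Hypothesis nC6 : ~ has_C6 E.
Definition path x y x1 y1 :=
  [&& x \in A, y \in B, x1 \in A, y1 \in B, E x y1, E x1 y1, E x1 y, x != x1 & y != y1].

Lemma path_uniq x y x1 y1 x2 y2 : path x y x1 y1 -> path x y x2 y2 -> (x1, y1) = (x2, y2).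
Proof.
move=> /and4P[xA yB x1A /and4P[y1B e1 e2 /and3P[e3 n1 n2]]] /and4P[_ _ x2A /and4P[y2B f1 f2 /and3P[f3 m1 m2]]].
have [ey|ny] := eqVneq y1 y2.
  subst y2; have [ex|nx] := eqVneq x1 x2; first by subst x2.
  exfalso; apply: nC4; exists x1, x2, y1, y.
  by split => //; [rewrite eq_sym | rewrite e2 f2 f3 e3].
have [ex|nx] := eqVneq x1 x2.
  subst x2; exfalso; apply: nC4; exists x, x1, y1, y2.
  by split => //; rewrite e1 e2 f2 f1.
exfalso; apply: nC6; exists x, x1, x2, y1, y, y2.
split => /=.
- by rewrite !inE negb_or n1 m1 nx.
- by rewrite !inE negb_or ny andbT [y1 == y]eq_sym n2 m2.
- by rewrite e1 e2 e3 f3 f2 f1.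
Qed.

Lemma path_edge x y x1 y1 : E x y -> path x y x1 y1 -> False.
Proof.
move=> exy /and4P[xA yB x1A /and4P[y1B e1 e2 /and3P[e3 n1 n2]]].
apply: nC4; exists x, x1, y1, y; split => //; first by rewrite eq_sym.
by rewrite e1 e2 e3 exy.
Qed.


Definition Pn := (\sum_x \sum_y \sum_x1 \sum_y1 (path x y x1 y1 : nat))%N.

Lemma count_le : (eAB + Pn <= #|A| * #|B|)%N.
Proof.
have hAB : (#|A| * #|B| = \sum_x \sum_y ((x \in A) && (y \in B) : nat))%N.
  rewrite !card_sum big_distrl /=; apply: eq_bigr => x _.
  by rewrite big_distrr /=; apply: eq_bigr => y _; rewrite mulnb.
have he : (eAB = \sum_x \sum_y ((x \in A) && (y \in B) && E x y : nat))%N.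
  rewrite /eAB big_mkcond /=; apply: eq_bigr => x _.
  rewrite /dA card_sum; case: (x \in A) => /=; last by rewrite big1.
  by apply: eq_bigr => y _; rewrite inE.
rewrite hAB he /Pn -big_split; apply: leq_sum => x _.
rewrite -big_split; apply: leq_sum => y _ /=.
have [xyAB|nAB] := boolP ((x \in A) && (y \in B)); last first.
  rewrite big1 // => x1 _; rewrite big1 // => y1 _.
  rewrite /path; move: nAB; by case: (x \in A); case: (y \in B).
rewrite /=.
have [exy|nexy] := boolP (E x y).
  rewrite big1 // => x1 _; rewrite big1 // => y1 _.
  by case: (boolP (path x y x1 y1)) => // /(path_edge exy).
rewrite /= add0n pair_bigA /=.
apply: (@sum_le1 _ (fun p : V * W => path x y p.1 p.2)) => [[x1 y1] [x2 y2]] /= h1 h2.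
exact: path_uniq h1 h2.
Qed.


Lemma Pn_eq : Pn = (\sum_(x1 in A) \sum_(y1 in B | E x1 y1) (dA x1).-1 * (dB y1).-1)%N.
Proof.
rewrite /Pn.
under eq_bigr => x _ do rewrite exchange_big.
under eq_bigr => x _ do under eq_bigr => x1 _ do rewrite exchange_big.
rewrite exchange_big.
under eq_bigr => x1 _ do rewrite exchange_big.
rewrite [RHS]big_mkcond; apply: eq_bigr => x1 _.
case: (boolP (x1 \in A)) => x1A0; last first.
  rewrite big1 // => y1 _; rewrite big1 // => x _; rewrite big1 // => y _.
  by rewrite /path (negbTE x1A0) !andbF.
rewrite [RHS]big_mkcond /=; apply: eq_bigr => y1 _.
have fact : forall x y, path x y x1 y1 =
   [&& (x1 \in A) && (y1 \in B) && E x1 y1,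
       (x \in [set x in A | E x y1] :\ x1) & (y \in [set y in B | E x1 y] :\ y1)].
  move=> x y; rewrite /path !inE.
  by case: (x \in A); case: (y \in B); case: (x1 \in A); case: (y1 \in B);
     case: (E x y1); case: (E x1 y1); case: (E x1 y); case: (x != x1); case: (y != y1).
under eq_bigr => x _ do under eq_bigr => y _ do rewrite fact.
case: (boolP ((x1 \in A) && (y1 \in B) && E x1 y1)) => [c|nc]; last first.
  rewrite big1 => [|x _]; last by rewrite big1 // => y _; rewrite (negbTE nc).
  by move: nc; rewrite x1A0 /=; case: (_ && _).
move: c => /andP[/andP[x1A y1B] e11].
rewrite y1B e11 /=.
have h1 : (\sum_x \sum_y ((x \in [set x in A | E x y1] :\ x1) && (y \in [set y in B | E x1 y] :\ y1) : nat)
   = #|[set x in A | E x y1] :\ x1| * #|[set y in B | E x1 y] :\ y1|)%N.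
  rewrite !card_sum big_distrl /=; apply: eq_bigr => x _.
  by rewrite big_distrr /=; apply: eq_bigr => y _; rewrite mulnb.
rewrite h1 mulnC.
congr (_ * _).
  by rewrite /dA [in RHS](cardsD1 y1) !inE y1B e11.
by rewrite /dB [in RHS](cardsD1 x1) !inE x1A e11.
Qed.

End Count.

End Graph.

Definition fc (e v w : int) := v * w * (v * w - e) - e * (e - v) * (e - w).

Lemma fc_sym e v w : fc e v w = fc e w v.
Proof. rewrite /fc; lia. Qed.

Lemma fc_easy (e v w : int) : 0 <= e -> e <= v * w -> (e <= v \/ e <= w) -> 0 <= fc e v w.
Proof.
move=> e0 evw hor; rewrite /fc.
have [h1|h1] := lerP e v; have [h2|h2] := lerP e w.
-
  have -> : v * w * (v * w - e) - e * (e - v) * (e - w) =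
     (v * w - e) ^+ 2 + e ^+ 2 * (v + w - 1 - e) by rewrite !expr2; lia.
  have [->|epos] := eqVneq e 0; first by rewrite expr0n /= mul0r addr0 sqr_ge0.
  apply: addr_ge0; first exact: sqr_ge0.
  apply: mulr_ge0; first exact: sqr_ge0.
  lia.
- have : (e - v) * (e - w) <= 0 by nia. nia.
- have : (e - v) * (e - w) <= 0 by nia. nia.
- case: hor; lia.
Qed.

Lemma fc_iso e v w : 1 <= v -> 0 <= fc e (v - 1) w -> 0 <= fc e v w.
Proof.
move=> v1 h.
have -> : fc e v w = fc e (v - 1) w + ((e - w) ^+ 2 + w ^+ 2 * (2 * v - 2)) by rewrite /fc !expr2; lia.
apply: addr_ge0 => //; apply: addr_ge0; first exact: sqr_ge0.
apply: mulr_ge0; [exact: sqr_ge0 | lia].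
Qed.

Lemma fc_pend e v w : 1 <= e -> e <= v * w -> 0 <= w -> 1 <= v ->
  0 <= fc (e - 1) (v - 1) w -> 0 <= fc e v w.
Proof.
move=> e1 evw w0 v1 hF.
have [h|h] := lerP e v; first by apply: fc_easy; lia.
have [h'|h'] := lerP e w; first by apply: fc_easy; lia.
have v2 : 2 <= v.
  have [v1e|vn1] := eqVneq v 1; last by lia.
  by move: evw; rewrite v1e mul1r => /(lt_le_trans h'); rewrite ltxx.
set F := fc (e - 1) (v - 1) w in hF.
set k := e - v.
have id : (v - 1) * fc e v w = (v + 1) * F + 2 * k ^+ 2 * (e - 1 - w) + (v - 1) * (w ^+ 2 - w - k).
  rewrite /F /k /fc !expr2; ring.
have vp : 0 < v - 1 by lia.
suff key : 0 <= (v + 1) * F + 2 * k ^+ 2 * (e - 1 - w) + (v - 1) * (w ^+ 2 - w - k).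
  by rewrite -id pmulr_rge0 in key.
have t1 : 0 <= (v + 1) * F by apply: mulr_ge0 => //; lia.
have ew : 0 <= e - 1 - w by lia.
have t2 : 0 <= 2 * k ^+ 2 * (e - 1 - w) by apply: mulr_ge0 => //; apply: mulr_ge0 => //; exact: sqr_ge0.
have [c|c] := lerP k (w ^+ 2 - w).
  have t3 : 0 <= (v - 1) * (w ^+ 2 - w - k) by apply: mulr_ge0; lia.
  by apply: addr_ge0 => //; apply: addr_ge0.
have sq := sqr_ge0 (w - 1).
have kw : w <= k.
  move: sq c; rewrite !expr2 => sq c.
  have : (w - 1) * (w - 1) = w * w - w - w + 1 by ring.
  move: (w * w) => W2 eq; lia.
have k1 : 1 <= k by lia.
have t4 : v - 1 <= 2 * k * (e - 1 - w).
  have : 2 * 1 * (e - 1 - w) <= 2 * k * (e - 1 - w).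
    by apply: ler_wpM2r => //; lia.
  lia.
have t6 : k * (v - 1) <= 2 * k ^+ 2 * (e - 1 - w).
  have : k * (v - 1) <= k * (2 * k * (e - 1 - w)) by apply: ler_wpM2l => //; lia.
  by rewrite expr2; move=> h2; apply: (le_trans h2); rewrite le_eqVlt; apply/orP; left; apply/eqP; ring.
have t7 : 0 <= (v - 1) * (w ^+ 2 - w) by apply: mulr_ge0; [lia | rewrite expr2; nia].
have : (v - 1) * (w ^+ 2 - w - k) = (v - 1) * (w ^+ 2 - w) - k * (v - 1) by ring.
move=> eq; rewrite eq.
move: t1 t2 t6 t7 => t1 t2 t6 t7.
move: ((v + 1) * F) (2 * k ^+ 2 * (e - 1 - w)) (k * (v - 1)) ((v - 1) * (w ^+ 2 - w)) t1 t2 t6 t7.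
move=> a b c' d ha hb hc hd; lia.
Qed.


Local Close Scope classical_set_scope.

Section Main.
Variables (V W : finType) (E : V -> W -> bool).
Hypothesis nC4 : ~ has_C4 E.
Hypothesis nC6 : ~ has_C6 E.

Lemma dA_le B x : (dA E B x <= #|B|)%N.
Proof. by apply: subset_leq_card; apply/fintype.subsetP => y; rewrite inE => /andP[]. Qed.

Lemma eAB_le A B : (eAB E A B <= #|A| * #|B|)%N.
Proof.
rewrite /eAB -sum1_card big_distrl /=; apply: leq_sum => x _.
by rewrite mul1n dA_le.
Qed.

Lemma eAB_sym A B : eAB E A B = (\sum_(y in B) dB E A y)%N.
Proof.
rewrite /eAB.
have h1 : forall x, dA E B x = (\sum_(y in B | E x y) 1)%N.
  by move=> x; rewrite /dA -sum1_card; apply: eq_bigl => y; rewrite inE.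
have h2 : forall y, dB E A y = (\sum_(x in A | E x y) 1)%N.
  by move=> y; rewrite /dB -sum1_card; apply: eq_bigl => x; rewrite inE.
under eq_bigr => x _ do rewrite h1.
under [RHS]eq_bigr => y _ do rewrite h2.
rewrite (exchange_big_dep (fun y => y \in B)) => [|x y _ /andP[]//].
by apply: eq_bigr => y yB; apply: eq_bigl => x; rewrite yB.
Qed.


Lemma core_case (A : {set V}) (B : {set W}) : (forall x, x \in A -> (2 <= dA E B x)%N) ->
  (forall y, y \in B -> (2 <= dB E A y)%N) ->
  0 <= fc (eAB E A B)%:Z #|A|%:Z #|B|%:Z.
Proof.
move=> hA hB.
have hc := @core V W E A B Rdefinitions.R hA hB.
have hcnt := count_le A B nC4 nC6.
have hP : PR E A B Rdefinitions.R = (Pn E A B)%:R.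
  rewrite /PR Pn_eq natr_sum; apply: eq_bigr => x xA; rewrite natr_sum.
  apply: eq_bigr => y /andP[yB _].
  rewrite natrM -!subn1 !natrB //.
    exact: ltnW (hB y yB).
  exact: ltnW (hA x xA).
rewrite hP in hc.
rewrite -(ler_int Rdefinitions.R) rmorph0 /fc rmorphB !rmorphM !rmorphB !rmorphM /= -!pmulrn.
move: hcnt; rewrite -(ler_nat Rdefinitions.R) natrD natrM.
move: hc.
have v0 : (0 : Rdefinitions.R) <= #|A|%:R by exact: ler0n.
have w0 : (0 : Rdefinitions.R) <= #|B|%:R by exact: ler0n.
move: v0 w0.
move: (eAB E A B)%:R (Pn E A B)%:R #|A|%:R #|B|%:R => e P v w v0 w0 hc hcnt.
have vw0 : 0 <= v * w by rewrite mulr_ge0.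
have h1 : v * w * P <= v * w * (v * w - e) by rewrite ler_wpM2l //; lra.
rewrite subr_ge0; exact: le_trans hc h1.
Qed.


Lemma main_ind n : forall (A : {set V}) (B : {set W}), (#|A| + #|B| <= n)%N ->
  0 <= fc (eAB E A B)%:Z #|A|%:Z #|B|%:Z.
Proof.
elim: n => [|n IH] A B hn.
  have := eAB_le A B; have hA : #|A| = 0%N by lia.
  rewrite hA mul0n => he; apply: fc_easy; lia.
case: (pickP (fun x => (x \in A) && (dA E B x <= 1)%N)) => [x /andP[xA dx]|nA].
  have cA : #|A| = (#|A :\ x|).+1 by rewrite (cardsD1 x A) xA.
  have eA : eAB E A B = (dA E B x + eAB E (A :\ x) B)%N by rewrite /eAB (big_setD1 x xA).
  have ih : 0 <= fc (eAB E (A :\ x) B)%:Z #|A :\ x|%:Z #|B|%:Z by apply: IH; lia.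
  have hv : #|A|%:Z - 1 = #|A :\ x|%:Z by rewrite cA; lia.
  have he := eAB_le A B.
  move: dx; rewrite leq_eqVlt ltnS leqn0 => /orP[/eqP d1 | /eqP d0].
    apply: fc_pend; [lia | nia | lia | lia |].
    by rewrite hv eA d1 PoszD addrC addKr.
  by apply: fc_iso; [lia | rewrite hv eA d0 add0n].
case: (pickP (fun y => (y \in B) && (dB E A y <= 1)%N)) => [y /andP[yB dy]|nB].
  have cB : #|B| = (#|B :\ y|).+1 by rewrite (cardsD1 y B) yB.
  have eB : eAB E A B = (dB E A y + eAB E A (B :\ y))%N.
    by rewrite !eAB_sym (big_setD1 y yB).
  have ih : 0 <= fc (eAB E A (B :\ y))%:Z #|A|%:Z #|B :\ y|%:Z by apply: IH; lia.
  rewrite fc_sym in ih; rewrite fc_sym.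
  have hw : #|B|%:Z - 1 = #|B :\ y|%:Z by rewrite cB; lia.
  have he := eAB_le A B.
  move: dy; rewrite leq_eqVlt ltnS leqn0 => /orP[/eqP d1 | /eqP d0].
    apply: fc_pend; [lia | nia | lia | lia |].
    by rewrite hw eB d1 PoszD addrC addKr.
  by apply: fc_iso; [lia | rewrite hw eB d0 add0n].
apply: core_case.
  move=> x xA; have := nA x; rewrite /= xA /= => /negbT; by rewrite -ltnNge.
move=> y yB; have := nB y; rewrite /= yB /= => /negbT; by rewrite -ltnNge.
Qed.

Lemma nedges_eAB : nedges E = eAB E [set: V] [set: W].
Proof.
  rewrite /nedges /eAB (@card_sum (V * W)%type [set p : V * W | E p.1 p.2]).
  transitivity (\sum_x \sum_y (E x y : nat))%N.
    rewrite pair_bigA /=; apply: eq_bigr => [[x y]] _; by rewrite inE.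
  rewrite [RHS]big_mkcond /=; apply: eq_bigr => x _; rewrite inE /dA card_sum.
  by apply: eq_bigr => y _; rewrite !inE.
Qed.

Lemma part1 : 0 <= fc (nedges E)%:Z #|V|%:Z #|W|%:Z.
Proof.
have -> : nedges E = eAB E [set: V] [set: W].
  rewrite /nedges /eAB (@card_sum (V * W)%type [set p : V * W | E p.1 p.2]).
  transitivity (\sum_x \sum_y (E x y : nat))%N.
    rewrite pair_bigA /=; apply: eq_bigr => [[x y]] _; by rewrite inE.
  rewrite [RHS]big_mkcond /=; apply: eq_bigr => x _; rewrite inE /dA card_sum.
  by apply: eq_bigr => y _; rewrite !inE.
have := @main_ind (#|[set: V]| + #|[set: W]|) [set: V] [set: W] (leqnn _).
by rewrite !cardsT.
Qed.

End Main.

Local Close Scope ring_scope.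

Lemma nedges_sum (V W : finType) (E : V -> W -> bool) :
  nedges E = (\sum_x #|[set y | E x y]|)%N.
Proof.
rewrite nedges_eAB /eAB; apply: eq_big => x; first by rewrite inE.
by move=> _; rewrite /dA; apply: eq_card => y; rewrite !inE.
Qed.

Theorem theorem1p1 (V W : finType) (E : V -> W -> bool) :
  ~ has_C4 E -> ~ has_C6 E ->
  let v := #|V| in let w := #|W| in let e := nedges E in
  ((e%:Z ^+ 3 - (v%:Z + w%:Z) * e%:Z ^+ 2 + 2 * v%:Z * w%:Z * e%:Z
      - v%:Z ^+ 2 * w%:Z ^+ 2 <= 0)%R)
  /\ (w ^ 2 %/ 4 <= v -> e <= v + w ^ 2 %/ 4)%N.
Proof.
move=> h4 h6 v w e; split.
  have := part1 h4 h6; rewrite /fc -/v -/w -/e => h.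
  rewrite -oppr_ge0.
  have -> : (- (e%:Z ^+ 3 - (v%:Z + w%:Z) * e%:Z ^+ 2 + 2 * v%:Z * w%:Z * e%:Z
      - v%:Z ^+ 2 * w%:Z ^+ 2) = v%:Z * w%:Z * (v%:Z * w%:Z - e%:Z) - e%:Z * (e%:Z - v%:Z) * (e%:Z - w%:Z))%R.
    by rewrite !expr2 exprS expr2; ring.
  exact: h.
move=> _.
have hm := mt_final h4 h6.
have he : (e <= v + \sum_x (#|[set y | E x y]|).-1)%N.
  rewrite /e nedges_sum /v -sum1_card -big_split /=; apply: leq_sum => x _.
  by case: (#|_|).
rewrite -/w in hm.
have : (\sum_x (#|[set y | E x y]|).-1 <= w ^ 2 %/ 4)%N by rewrite leq_divRL // mulnC.
lia.
Qed.
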